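(* Let $f:[0,1]\to[0,1]$ be continuous and strictly increasing with $f(0)=0$, $f(1)=1$, and $f(y)=e$ for some $y,e\in\,]0,1[$ with $y>e$; put $x=f(e)$ (so $x<e$). Let $a=\lim_{n\to+\infty}f^{(n)}(x)$ and $d=\lim_{n\to+\infty}f^{(-n)}(x)$. Let $F:[x,e]^2\to[f(x),e]$ be commutative and non-decreasing with $F(s,e)=s$ and $F(s,x)=f(s)$ for all $s\in[x,e]$, and such that for all $s,t,u\in\,]x,e]$ with $F(s,t)\in\,]f^{(n+1)}(e),f^{(n)}(e)]$ and $F(t,u)\in\,]f^{(m+1)}(e),f^{(m)}(e)]$, $n,m\in\{0,1\}$, $$f^{(m)}\big(F(s,f^{(-m)}(F(t,u)))\big)=f^{(n)}\big(F(f^{(-n)}(F(s,t)),u)\big).$$ Then the function $U:]a,d[^2\to\,]a,d[$ given by $$U(s,t)=f^{(n+m)}\big(F(f^{(-n)}(s),f^{(-m)}(t))\big)\quad\text{if }s\in\,]f^{(n+1)}(e),f^{(n)}(e)],\ t\in\,]f^{(m+1)}(e),f^{(m)}(e)],\ n,m\in\mathbb{Z},$$ is well defined and is a uninorm on $]a,d[$, i.e., it is commutative, associative, non-decreasing in each variable, and $e$ is its neutral element.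
   Context: For a continuous strictly increasing bijection $f:[0,1]\to[0,1]$: $f^{(0)}=\mathrm{id}$, $f^{(n)}=f\circ f^{(n-1)}$ and $f^{(-n)}=f^{-1}\circ f^{(-n+1)}$ for $n\in\mathbb{N}$, where $f^{-1}$ is the inverse function of $f$. *)

(* Defs.v *)
From Stdlib Require Import Reals Lra ZArith ClassicalEpsilon.
Open Scope R_scope.

Definition cont_on_01 (f : R -> R) : Prop :=
  forall x, 0 <= x <= 1 -> forall eps, 0 < eps ->
    exists delta, 0 < delta /\
      forall y, 0 <= y <= 1 -> Rabs (y - x) < delta -> Rabs (f y - f x) < eps.

(* the inverse function f^{-1} of f : [0,1] -> [0,1] (chosen by epsilon;
   for a bijection of [0,1] it is the unique preimage in [0,1]) *)
Definition finv (f : R -> R) (y : R) : R :=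
  epsilon (inhabits 0) (fun x => 0 <= x <= 1 /\ f x = y).

Definition fiter (f : R -> R) (n : Z) : R -> R :=
  match n with
  | Z0 => fun s => s
  | Zpos p => Nat.iter (Pos.to_nat p) f
  | Zneg p => Nat.iter (Pos.to_nat p) (finv f)
  end.

Definition is_uninorm_on (a d e : R) (U : R -> R -> R) : Prop :=
  a < e < d /\
  (forall s t, a < s < d -> a < t < d -> a < U s t < d) /\
  (forall s t, a < s < d -> a < t < d -> U s t = U t s) /\
  (forall s t u, a < s < d -> a < t < d -> a < u < d ->
      U (U s t) u = U s (U t u)) /\
  (forall s s' t t', a < s < d -> a < s' < d -> a < t < d -> a < t' < d ->
      s <= s' -> t <= t' -> U s t <= U s' t') /\
  (forall s, a < s < d -> U s e = s /\ U e s = s).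

(* Main.v *)
Require Import Defs.
From Stdlib Require Import Reals ZArith Lra Lia ClassicalEpsilon.
Open Scope R_scope.

Record good (f : R -> R) : Prop := {
  g_mono : forall s t, 0 <= s <= 1 -> 0 <= t <= 1 -> s < t -> f s < f t;
  g_into : forall s, 0 <= s <= 1 -> 0 <= f s <= 1;
  g_onto : forall t, 0 <= t <= 1 -> exists s, 0 <= s <= 1 /\ f s = t }.

Lemma fiter0 f s : fiter f 0 s = s. Proof. reflexivity. Qed.
Lemma fiter1 f s : fiter f 1 s = f s. Proof. reflexivity. Qed.
Lemma fiter2 f s : fiter f 2 s = f (f s). Proof. reflexivity. Qed.

Lemma finv_spec f (G : good f) t : 0 <= t <= 1 -> 0 <= finv f t <= 1 /\ f (finv f t) = t.
Proof. intros Ht. unfold finv. apply epsilon_spec. apply (g_onto f G t Ht). Qed.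

Lemma f_inj f (G : good f) s t : 0 <= s <= 1 -> 0 <= t <= 1 -> f s = f t -> s = t.
Proof.
  intros Hs Ht H. destruct (Rtotal_order s t) as [h|[h|h]]; auto.
  - apply (g_mono f G) in h; auto; lra.
  - apply (g_mono f G) in h; auto; lra.
Qed.

Lemma finv_f f (G : good f) s : 0 <= s <= 1 -> finv f (f s) = s.
Proof.
  intros Hs. destruct (finv_spec f G (f s) (g_into f G s Hs)) as [h1 h2].
  apply (f_inj f G); auto.
Qed.

Lemma finv_lt f (G : good f) s t : 0 <= s <= 1 -> 0 <= t <= 1 -> s < t -> finv f s < finv f t.
Proof.
  intros Hs Ht H. destruct (finv_spec f G s Hs) as [a1 a2].
  destruct (finv_spec f G t Ht) as [b1 b2].
  destruct (Rlt_le_dec (finv f s) (finv f t)) as [h|h]; auto.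
  destruct (Rle_lt_or_eq_dec _ _ h) as [h'|h'].
  - apply (g_mono f G) in h'; auto; lra.
  - rewrite h' in b2. lra.
Qed.

Lemma fiter_pos f k s : fiter f (Z.of_nat k) s = Nat.iter k f s.
Proof. destruct k; [reflexivity|]. simpl. rewrite SuccNat2Pos.id_succ. reflexivity. Qed.
Lemma fiter_neg f k s : fiter f (- Z.of_nat k) s = Nat.iter k (finv f) s.
Proof. destruct k; [reflexivity|]. simpl. rewrite SuccNat2Pos.id_succ. reflexivity. Qed.

Lemma Z_cases (n : Z) : exists k, n = Z.of_nat k \/ n = (- Z.of_nat k)%Z.
Proof. exists (Z.abs_nat n). lia. Qed.

Lemma iter_I01 f (G : good f) k s : 0 <= s <= 1 -> 0 <= Nat.iter k f s <= 1.
Proof. intros H; induction k; simpl; auto. apply (g_into f G); auto. Qed.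
Lemma iterinv_I01 f (G : good f) k s : 0 <= s <= 1 -> 0 <= Nat.iter k (finv f) s <= 1.
Proof. intros H; induction k; simpl; auto. apply (finv_spec f G); auto. Qed.

Lemma fiter_I01 f (G : good f) n s : 0 <= s <= 1 -> 0 <= fiter f n s <= 1.
Proof.
  intros H. destruct (Z_cases n) as [k [->| ->]].
  - rewrite fiter_pos. apply iter_I01; auto.
  - rewrite fiter_neg. apply iterinv_I01; auto.
Qed.

Lemma fiter_succ f (G : good f) n s : 0 <= s <= 1 -> fiter f (n+1) s = f (fiter f n s).
Proof.
  intros H. destruct (Z_cases n) as [k [->| ->]].
  - replace (Z.of_nat k + 1)%Z with (Z.of_nat (S k)) by lia. rewrite !fiter_pos. reflexivity.
  - destruct k.
    + replace (- Z.of_nat 0 + 1)%Z with (Z.of_nat 1) by lia. rewrite fiter_pos, fiter_neg. reflexivity.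
    + replace (- Z.of_nat (S k) + 1)%Z with (- Z.of_nat k)%Z by lia. rewrite !fiter_neg. simpl.
      symmetry. apply (finv_spec f G). apply iterinv_I01; auto.
Qed.

Lemma fiter_pred f (G : good f) n s : 0 <= s <= 1 -> fiter f (n-1) s = finv f (fiter f n s).
Proof.
  intros H. replace n with ((n - 1) + 1)%Z at 2 by lia.
  rewrite (fiter_succ f G); auto. rewrite (finv_f f G); auto. apply fiter_I01; auto.
Qed.

Lemma fiter_add f (G : good f) n m s : 0 <= s <= 1 -> fiter f n (fiter f m s) = fiter f (n+m) s.
Proof.
  intros H. induction n using Z.peano_ind.
  - reflexivity.
  - unfold Z.succ. rewrite (fiter_succ f G), IHn; [|apply fiter_I01; auto].
    replace (n + 1 + m)%Z with (n + m + 1)%Z by lia. rewrite (fiter_succ f G); auto.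
  - replace (Z.pred n) with (n - 1)%Z by lia.
    rewrite (fiter_pred f G), IHn; [|apply fiter_I01; auto].
    replace (n - 1 + m)%Z with (n + m - 1)%Z by lia. rewrite (fiter_pred f G); auto.
Qed.

Lemma fiter_mono f (G : good f) n s t : 0 <= s <= 1 -> 0 <= t <= 1 -> s < t ->
  fiter f n s < fiter f n t.
Proof.
  intros Hs Ht H. induction n using Z.peano_ind.
  - exact H.
  - unfold Z.succ. rewrite !(fiter_succ f G); auto. apply (g_mono f G); auto; apply fiter_I01; auto.
  - replace (Z.pred n) with (n - 1)%Z by lia.
    rewrite !(fiter_pred f G); auto. apply finv_lt; auto; apply fiter_I01; auto.
Qed.

Lemma fiter_le f (G : good f) n s t : 0 <= s <= 1 -> 0 <= t <= 1 -> s <= t ->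
  fiter f n s <= fiter f n t.
Proof.
  intros Hs Ht H. destruct (Rle_lt_or_eq_dec _ _ H) as [h|h].
  - left; apply fiter_mono; auto.
  - subst; lra.
Qed.


Lemma E_I01 f (G : good f) e (he : 0 <= e <= 1) n : 0 <= fiter f n e <= 1.
Proof. apply fiter_I01; auto. Qed.

Lemma E_succ f (G : good f) e (he : 0 <= e <= 1) (hfe : f e < e) n :
  fiter f (n+1) e < fiter f n e.
Proof.
  rewrite <- (fiter_add f G n 1 e he). rewrite fiter1.
  apply fiter_mono; auto. apply (g_into f G); auto.
Qed.

Lemma E_lt f (G : good f) e (he : 0 <= e <= 1) (hfe : f e < e) n m :
  (n < m)%Z -> fiter f m e < fiter f n e.
Proof.
  intros H. assert (K : forall k : nat, fiter f (n + Z.of_nat k + 1) e < fiter f n e).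
  { induction k.
    - replace (n + Z.of_nat 0 + 1)%Z with (n+1)%Z by lia. apply E_succ; auto.
    - replace (n + Z.of_nat (S k) + 1)%Z with ((n + Z.of_nat k + 1) + 1)%Z by lia.
      eapply Rlt_trans; [apply E_succ; auto|exact IHk]. }
  replace m with (n + Z.of_nat (Z.to_nat (m - n - 1)) + 1)%Z by lia. apply K.
Qed.

Lemma E_le f (G : good f) e (he : 0 <= e <= 1) (hfe : f e < e) n m :
  (n <= m)%Z -> fiter f m e <= fiter f n e.
Proof.
  intros H. destruct (Z.eq_dec n m) as [->|h]; [lra|]. left; apply E_lt; auto; lia.
Qed.

Lemma betw_I01 f (G : good f) e (he : 0 <= e <= 1) i j v :
  fiter f i e <= v <= fiter f j e -> 0 <= v <= 1.
Proof.
  intros H. pose proof (E_I01 f G e he i). pose proof (E_I01 f G e he j). lra.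
Qed.

Lemma shift_blk f (G : good f) e (he : 0 <= e <= 1) (hfe : f e < e) p j v :
  fiter f (j+1) e < v <= fiter f j e ->
  fiter f (p+j+1) e < fiter f p v <= fiter f (p+j) e.
Proof.
  intros H. assert (Hv : 0 <= v <= 1) by (apply (betw_I01 f G e he (j+1) j); lra).
  rewrite <- (fiter_add f G p j e he).
  replace (p+j+1)%Z with (p+(j+1))%Z by lia.
  rewrite <- (fiter_add f G p (j+1) e he). split.
  - apply fiter_mono; auto. apply E_I01; auto. lra.
  - apply fiter_le; auto. apply E_I01; auto. lra.
Qed.

Lemma norm_blk f (G : good f) e (he : 0 <= e <= 1) (hfe : f e < e) n s :
  fiter f (n+1) e < s <= fiter f n e -> f e < fiter f (-n) s <= e.
Proof.
  intros H. pose proof (shift_blk f G e he hfe (-n) n s H) as K.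
  replace (-n + n + 1)%Z with 1%Z in K by lia. replace (-n + n)%Z with 0%Z in K by lia.
  rewrite fiter1, fiter0 in K. exact K.
Qed.

Lemma blk_unique f (G : good f) e (he : 0 <= e <= 1) (hfe : f e < e) n m s :
  fiter f (n+1) e < s <= fiter f n e -> fiter f (m+1) e < s <= fiter f m e -> n = m.
Proof.
  intros H1 H2. destruct (Z.lt_trichotomy n m) as [h|[h|h]]; auto.
  - pose proof (E_le f G e he hfe (n+1) m ltac:(lia)). lra.
  - pose proof (E_le f G e he hfe (m+1) n ltac:(lia)). lra.
Qed.

Lemma iter_below f (G : good f) e (he : 0 <= e <= 1) (hfe : f e < e) m k t :
  fiter f (m+1) e < t <= fiter f m e -> (0 <= k)%Z -> fiter f k t <= t.
Proof.
  intros H Hk. destruct (Z.eq_dec k 0) as [->|hk]; [rewrite fiter0; lra|].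
  pose proof (shift_blk f G e he hfe k m t H).
  pose proof (E_le f G e he hfe (m+1) (k+m) ltac:(lia)). lra.
Qed.

Lemma limit_lower (u : nat -> R) a :
  Un_cv u a -> (forall n, u (S n) <= u n) -> forall n, a <= u n.
Proof.
  intros Hc Hd n. destruct (Rle_lt_dec a (u n)) as [h|h]; auto.
  exfalso. destruct (Hc (a - u n)) as [N HN]; [lra|].
  assert (Hm : forall k, u (n + k)%nat <= u n).
  { induction k. rewrite Nat.add_0_r; lra. rewrite Nat.add_succ_r. specialize (Hd (n+k)%nat). lra. }
  specialize (HN (N + n)%nat ltac:(lia)). specialize (Hm N). rewrite Nat.add_comm in Hm.
  unfold Rdist in HN. apply Rabs_def2 in HN. lra.
Qed.

Lemma limit_upper (u : nat -> R) a :
  Un_cv u a -> (forall n, u n <= u (S n)) -> forall n, u n <= a.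
Proof.
  intros Hc Hd n. destruct (Rle_lt_dec (u n) a) as [h|h]; auto.
  exfalso. destruct (Hc (u n - a)) as [N HN]; [lra|].
  assert (Hm : forall k, u n <= u (n + k)%nat).
  { induction k. rewrite Nat.add_0_r; lra. rewrite Nat.add_succ_r. specialize (Hd (n+k)%nat). lra. }
  specialize (HN (N + n)%nat ltac:(lia)). specialize (Hm N). rewrite Nat.add_comm in Hm.
  unfold Rdist in HN. apply Rabs_def2 in HN. lra.
Qed.

Definition blk (f : R -> R) (e s : R) : Z :=
  epsilon (inhabits 0%Z) (fun n : Z => fiter f (n+1) e < s <= fiter f n e).

Definition Uf (f : R -> R) (e : R) (F : R -> R -> R) (s t : R) : R :=
  fiter f (blk f e s + blk f e t) (F (fiter f (- blk f e s) s) (fiter f (- blk f e t) t)).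

Theorem mainTheorem9 (f : R -> R) (y e a d : R) (F : R -> R -> R)
  (hf_cont : cont_on_01 f)
  (hf_mono : forall s t, 0 <= s <= 1 -> 0 <= t <= 1 -> s < t -> f s < f t)
  (hf_into : forall s, 0 <= s <= 1 -> 0 <= f s <= 1)
  (hf_onto : forall t, 0 <= t <= 1 -> exists s, 0 <= s <= 1 /\ f s = t)
  (hf0 : f 0 = 0) (hf1 : f 1 = 1)
  (hy : 0 < y < 1) (he : 0 < e < 1) (hye : e < y) (hfy : f y = e)
  (ha : Un_cv (fun n : nat => fiter f (Z.of_nat n) (f e)) a)
  (hd : Un_cv (fun n : nat => fiter f (- Z.of_nat n)%Z (f e)) d)
  (hF_range : forall s t, f e <= s <= e -> f e <= t <= e ->
      f (f e) <= F s t <= e)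
  (hF_comm : forall s t, f e <= s <= e -> f e <= t <= e -> F s t = F t s)
  (hF_mono : forall s s' t t', f e <= s <= e -> f e <= s' <= e ->
      f e <= t <= e -> f e <= t' <= e -> s <= s' -> t <= t' ->
      F s t <= F s' t')
  (hF_e : forall s, f e <= s <= e -> F s e = s)
  (hF_x : forall s, f e <= s <= e -> F s (f e) = f s)
  (hF_assoc : forall (s t u : R) (n m : Z),
      f e < s <= e -> f e < t <= e -> f e < u <= e ->
      (n = 0 \/ n = 1)%Z -> (m = 0 \/ m = 1)%Z ->
      fiter f (n + 1) e < F s t <= fiter f n e ->
      fiter f (m + 1) e < F t u <= fiter f m e ->
      fiter f m (F s (fiter f (- m) (F t u)))
      = fiter f n (F (fiter f (- n) (F s t)) u)) :
  (forall s, a < s < d -> exists n : Z, fiter f (n + 1) e < s <= fiter f n e) /\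
  exists U : R -> R -> R,
    (forall (s t : R) (n m : Z), a < s < d -> a < t < d ->
       fiter f (n + 1) e < s <= fiter f n e ->
       fiter f (m + 1) e < t <= fiter f m e ->
       U s t = fiter f (n + m) (F (fiter f (- n) s) (fiter f (- m) t))) /\
    is_uninorm_on a d e U.
Proof.
  assert (G : good f) by (constructor; auto).
  assert (he01 : 0 <= e <= 1) by lra.
  assert (hfe : f e < e) by (rewrite <- hfy at 2; apply hf_mono; lra).
  assert (hfe01 : 0 <= f e <= 1) by auto.
  assert (hffe01 : 0 <= f (f e) <= 1) by auto.
  assert (Eshift : forall n, fiter f n (f e) = fiter f (n+1) e).
  { intros n. rewrite <- (fiter_add f G n 1 e he01). reflexivity. }
  assert (HaE : forall n, a < fiter f n e).
  { intros n. assert (K := limit_lower _ a ha).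
    assert (K' : forall k, a <= fiter f (Z.of_nat k + 1) e).
    { intros k. rewrite <- Eshift. apply K. intros j. rewrite !Eshift.
      apply E_le; auto. lia. }
    specialize (K' (Z.to_nat (Z.abs n))).
    pose proof (E_lt f G e he01 hfe n (Z.of_nat (Z.to_nat (Z.abs n)) + 1) ltac:(lia)). lra. }
  assert (HdE : forall n, fiter f n e < d).
  { intros n. assert (K := limit_upper _ d hd).
    assert (K' : forall k, fiter f (- Z.of_nat k + 1) e <= d).
    { intros k. rewrite <- Eshift. apply K. intros j. rewrite !Eshift.
      apply E_le; auto. lia. }
    specialize (K' (Z.to_nat (Z.abs n) + 2)%nat).
    pose proof (E_lt f G e he01 hfe (- Z.of_nat (Z.to_nat (Z.abs n) + 2) + 1) n ltac:(lia)). lra. }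
  assert (Hblk : forall s, a < s < d -> exists n : Z, fiter f (n + 1) e < s <= fiter f n e).
  { intros s Hs.
    destruct (ha (s - a) ltac:(lra)) as [N HN]. specialize (HN N (le_n _)).
    unfold Rdist in HN. apply Rabs_def2 in HN. rewrite Eshift in HN.
    destruct (hd (d - s) ltac:(lra)) as [N' HN']. specialize (HN' N' (le_n _)).
    unfold Rdist in HN'. apply Rabs_def2 in HN'. rewrite Eshift in HN'.
    assert (Kb : forall k : nat, forall M, fiter f (M + Z.of_nat k) e < s -> s <= fiter f M e ->
               exists n, fiter f (n + 1) e < s <= fiter f n e).
    { induction k; intros M H1 H2.
      - rewrite Z.add_0_r in H1. lra.
      - destruct (Rlt_le_dec (fiter f (M+1) e) s) as [h|h].
        + exists M; split; auto.
        + apply (IHk (M+1)%Z); auto. replace (M + 1 + Z.of_nat k)%Z with (M + Z.of_nat (S k))%Z by lia. auto. }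
    apply (Kb (Z.to_nat (Z.of_nat N + 1 - (- Z.of_nat N' + 1))) (- Z.of_nat N' + 1)%Z).
    - replace (- Z.of_nat N' + 1 + Z.of_nat (Z.to_nat (Z.of_nat N + 1 - (- Z.of_nat N' + 1))))%Z
        with (Z.of_nat N + 1)%Z by lia. lra.
    - lra. }
  assert (Uspec : forall (s t : R) (n m : Z), a < s < d -> a < t < d ->
       fiter f (n + 1) e < s <= fiter f n e ->
       fiter f (m + 1) e < t <= fiter f m e ->
       Uf f e F s t = fiter f (n + m) (F (fiter f (- n) s) (fiter f (- m) t))).
  { intros s t n m Hs Ht Hn Hm. unfold Uf.
    assert (B : forall z k, a < z < d -> fiter f (k + 1) e < z <= fiter f k e -> blk f e z = k).
    { intros z k Hz Hk. apply (blk_unique f G e he01 hfe _ _ z); auto.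
      unfold blk. apply epsilon_spec. apply Hblk; auto. }
    rewrite (B s n), (B t m); auto. }
  split; [exact Hblk|]. exists (Uf f e F). split; [exact Uspec|].
  assert (Hnorm : forall s n, fiter f (n + 1) e < s <= fiter f n e -> f e < fiter f (-n) s <= e).
  { intros s n H. apply (norm_blk f G e he01 hfe); auto. }
  assert (HsI : forall s n, fiter f (n + 1) e < s <= fiter f n e -> 0 <= s <= 1).
  { intros s n H. apply (betw_I01 f G e he01 (n+1) n). lra. }
  assert (HFr : forall s0 t0, f e < s0 <= e -> f e < t0 <= e -> f (f e) < F s0 t0 <= e).
  { intros s0 t0 H1 H2. split; [|apply hF_range; lra].
    assert (F (f e) t0 <= F s0 t0) by (apply hF_mono; lra).
    rewrite hF_comm, hF_x in H; try lra.
    assert (f (f e) < f t0) by (apply hf_mono; auto; lra). lra. }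
  assert (HFb : forall s0 t0, f e < s0 <= e -> f e < t0 <= e ->
     exists j, (j = 0 \/ j = 1)%Z /\ fiter f (j+1) e < F s0 t0 <= fiter f j e).
  { intros s0 t0 H1 H2. pose proof (HFr s0 t0 H1 H2).
    destruct (Rlt_le_dec (f e) (F s0 t0)).
    - exists 0%Z. split; auto. simpl (0+1)%Z. rewrite fiter1, fiter0. lra.
    - exists 1%Z. split; auto. simpl (1+1)%Z. rewrite fiter1, fiter2. lra. }
  assert (Hin : forall p v j, fiter f (j + 1) e < v <= fiter f j e -> a < fiter f p v < d).
  { intros p v j H. pose proof (shift_blk f G e he01 hfe p j v H).
    pose proof (HaE (p+j+1)%Z). pose proof (HdE (p+j)%Z). lra. }
  assert (Hinb : forall p v j, fiter f (j + 1) e < v <= fiter f j e ->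
      fiter f (p+j + 1) e < fiter f p v <= fiter f (p+j) e).
  { intros p v j H. replace (p+j+1)%Z with (p+j+1)%Z by lia. apply (shift_blk f G e he01 hfe); auto. }
  assert (Hcomm : forall s t, a < s < d -> a < t < d -> Uf f e F s t = Uf f e F t s).
  { intros s t Hs Ht. destruct (Hblk s Hs) as [n Hn]. destruct (Hblk t Ht) as [m Hm].
    rewrite (Uspec s t n m), (Uspec t s m n); auto. rewrite Z.add_comm, hF_comm; auto.
    all: pose proof (Hnorm t m Hm); pose proof (Hnorm s n Hn); lra. }
  assert (Hrange : forall s t, a < s < d -> a < t < d -> a < Uf f e F s t < d).
  { intros s t Hs Ht. destruct (Hblk s Hs) as [n Hn]. destruct (Hblk t Ht) as [m Hm].
    rewrite (Uspec s t n m); auto.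
    destruct (HFb _ _ (Hnorm s n Hn) (Hnorm t m Hm)) as [j [_ Hj]]. eapply Hin; eauto. }
  assert (Hneut : forall s, a < s < d -> Uf f e F s e = s).
  { intros s Hs. destruct (Hblk s Hs) as [n Hn].
    assert (He0 : fiter f (0 + 1) e < e <= fiter f 0 e) by (simpl (0+1)%Z; rewrite fiter1, fiter0; lra).
    assert (a < e < d) by (pose proof (HaE 0%Z); pose proof (HdE 0%Z); rewrite fiter0 in *; lra).
    rewrite (Uspec s e n 0%Z); auto. simpl (- 0)%Z. rewrite fiter0.
    rewrite hF_e; [|pose proof (Hnorm s n Hn); lra].
    rewrite (fiter_add f G); [|eapply HsI; eauto]. replace (n + 0 + - n)%Z with 0%Z by lia.
    apply fiter0. }
  assert (Hmono1 : forall s s' t, a < s < d -> a < s' < d -> a < t < d -> s <= s' ->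
     Uf f e F s t <= Uf f e F s' t).
  { intros s s' t Hs Hs' Ht Hle. destruct (Hblk s Hs) as [n Hn].
    destruct (Hblk s' Hs') as [n' Hn']. destruct (Hblk t Ht) as [m Hm].
    pose proof (Hnorm s n Hn) as N1. pose proof (Hnorm s' n' Hn') as N2.
    pose proof (Hnorm t m Hm) as N3.
    pose proof (HsI s n Hn) as I1. pose proof (HsI s' n' Hn') as I2. pose proof (HsI t m Hm) as I3.
    rewrite (Uspec s t n m), (Uspec s' t n' m); auto.
    destruct (Z.eq_dec n n') as [<-|hne].
    - assert (fiter f (-n) s <= fiter f (-n) s') by (apply (fiter_le f G); auto).
      pose proof (HFr _ _ N1 N3). pose proof (HFr _ _ N2 N3).
      apply (fiter_le f G); try lra. apply hF_mono; lra.
    - assert (hlt : (n' < n)%Z).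
      { destruct (Z_lt_le_dec n n') as [h|h]; [|lia]. exfalso.
        pose proof (E_le f G e he01 hfe (n+1) n' ltac:(lia)). lra. }
      set (s0 := fiter f (-n) s) in *. set (s0' := fiter f (-n') s') in *.
      set (t0 := fiter f (-m) t) in *.
      pose proof (HFr _ _ N1 N3). pose proof (HFr _ _ N2 N3).
      assert (A1 : F s0 t0 <= t0).
      { assert (F s0 t0 <= F e t0) by (apply hF_mono; lra).
        rewrite (hF_comm e t0), hF_e in H1; lra. }
      assert (A2 : f t0 <= F s0' t0).
      { assert (F (f e) t0 <= F s0' t0) by (apply hF_mono; lra).
        rewrite (hF_comm (f e) t0), hF_x in H1; lra. }
      assert (E1 : fiter f (n+m) t0 = fiter f n t).
      { unfold t0. rewrite (fiter_add f G); auto. f_equal. lia. }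
      assert (E2 : fiter f (n'+m) (f t0) = fiter f (n'+1) t).
      { change (fiter f (n'+m) (fiter f 1 t0) = fiter f (n'+1) t). unfold t0.
        rewrite !(fiter_add f G); auto; [f_equal; lia | apply (fiter_I01 f G); auto]. }
      assert (E3 : fiter f n t = fiter f (n'+1) (fiter f (n - n' - 1) t)).
      { rewrite (fiter_add f G); auto. f_equal. lia. }
      assert (B1 : fiter f (n - n' - 1) t <= t).
      { apply (iter_below f G e he01 hfe m); auto. lia. }
      eapply Rle_trans. { apply (fiter_le f G (n+m) _ t0); try lra. }
      rewrite E1, E3. eapply Rle_trans. { apply (fiter_le f G (n'+1) _ t); auto.
        apply fiter_I01; auto. }
      rewrite <- E2. apply (fiter_le f G); try lra. apply hf_into; lra. }
  assert (Hassoc : forall s t u, a < s < d -> a < t < d -> a < u < d ->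
      Uf f e F (Uf f e F s t) u = Uf f e F s (Uf f e F t u)).
  { intros s t u Hs Ht Hu. destruct (Hblk s Hs) as [n Hn].
    destruct (Hblk t Ht) as [m Hm]. destruct (Hblk u Hu) as [k Hk].
    pose proof (Hnorm s n Hn) as N1. pose proof (Hnorm t m Hm) as N2.
    pose proof (Hnorm u k Hk) as N3.
    pose proof (HsI s n Hn) as I1. pose proof (HsI t m Hm) as I2. pose proof (HsI u k Hk) as I3.
    rewrite (Uspec s t n m), (Uspec t u m k); auto.
    set (s0 := fiter f (-n) s) in *. set (t0 := fiter f (-m) t) in *.
    set (u0 := fiter f (-k) u) in *.
    destruct (HFb s0 t0 N1 N2) as [j [Hj Hvj]]. destruct (HFb t0 u0 N2 N3) as [i [Hi Hwi]].
    pose proof (HA := hF_assoc s0 t0 u0 j i N1 N2 N3 Hj Hi Hvj Hwi).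
    set (v := F s0 t0) in *. set (w := F t0 u0) in *.
    pose proof (Hnorm v j Hvj) as Nv. pose proof (Hnorm w i Hwi) as Nw.
    pose proof (HsI v j Hvj) as Iv. pose proof (HsI w i Hwi) as Iw.
    rewrite (Uspec (fiter f (n+m)%Z v) u (n+m+j)%Z k); auto; try (eapply Hin; eauto); try (apply Hinb; auto).
    rewrite (Uspec s (fiter f (m+k)%Z w) n (m+k+i)%Z); auto; try (eapply Hin; eauto); try (apply Hinb; auto).
    rewrite (fiter_add f G (- (n+m+j)) (n+m) v Iv).
    replace (- (n+m+j) + (n+m))%Z with (-j)%Z by lia.
    rewrite (fiter_add f G (- (m+k+i)) (m+k) w Iw).
    replace (- (m+k+i) + (m+k))%Z with (-i)%Z by lia.
    pose proof (HFr _ _ Nv N3). pose proof (HFr _ _ N1 Nw).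
    replace (n + m + j + k)%Z with ((n+m+k) + j)%Z by lia.
    replace (n + (m + k + i))%Z with ((n+m+k) + i)%Z by lia.
    unfold s0, t0, u0 in *. rewrite <- !(fiter_add f G (n+m+k)); try lra. rewrite HA. reflexivity. }
  assert (a < e < d) by (pose proof (HaE 0%Z); pose proof (HdE 0%Z); rewrite fiter0 in *; lra).
  unfold is_uninorm_on. split; [auto|]. split; [auto|]. split; [auto|]. split; [auto|]. split.
  - intros s s' t t' Hs Hs' Ht Ht' H1 H2. eapply Rle_trans.
    + apply (Hmono1 s s' t); auto.
    + rewrite (Hcomm s' t), (Hcomm s' t'); auto.
  - intros s Hs. split; auto. rewrite Hcomm; auto.
Qed.
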